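(* There is a universal constant $\kappa>0$ such that for all sufficiently large $T$ the following holds. For every deterministic online algorithm that, in a market with one seller and two buyers, posts in each round a single price to all three traders, there exist a seller cost $c_1=0$ and buyer values $v_1,v_2\in[0,1]$ such that the cumulative gains-from-trade regret of the algorithm over $T$ rounds is at least $\kappa\cdot\frac{\log\log T}{\log\log\log\log T}$.
   Context: Two-sided market model: sellers have fixed unknown costs $c_i\in[0,1]$, buyers fixed unknown values $v_j\in[0,1]$. In each round the learner posts prices and observes every trader's accept/reject decision; a seller accepts a price $p$ iff $p\ge c_i$, a buyer accepts a price $q$ iff $q\le v_j$ (ties in favour of accepting). A maximum-cardinality matching between accepting sellers and accepting buyers is formed; the gains-from-trade (GFT) of a matching $M$ is $\sum_{(i,j)\in M}(v_j-c_i)$. Benchmark: $\mathrm{GFT}^\star$, the maximum GFT over all matchings between sellers and buyers. Round-$t$ regret is $\mathrm{GFT}^\star$ minus the minimum GFT over all maximum-cardinality matchings of the traders accepting in round $t$ (worst-case matching rule); the cumulative regret is the sum over $t=1,\dots,T$. A single-price mechanism posts one common price to all traders. *)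

(* Defs.v *)
From HB Require Import structures.
From mathcomp Require Import all_boot all_order all_algebra.
From mathcomp Require Import reals exp.
Set Implicit Arguments. Unset Strict Implicit. Unset Printing Implicit Defensive.
Import Order.TTheory GRing.Theory Num.Theory.
Local Open Scope ring_scope.

Section Market.
Variables (R : realType) (n m : nat).
Variables (c : 'I_n -> R) (v : 'I_m -> R).

Definition edge := ('I_n * 'I_m)%type.

Definition is_matching (M : {set edge}) : bool :=
  [forall x in M, forall y in M, ((x.1 == y.1) || (x.2 == y.2)) ==> (x == y)].

Definition gft (M : {set edge}) : R := \sum_(e in M) (v e.2 - c e.1).

(* benchmark: max GFT over all matchings (the empty matching has GFT 0) *)
Definition gft_star : R :=
  \big[Num.max/0]_(M : {set edge} | is_matching M) gft M.

Definition seller_accepts (p : R) (i : 'I_n) : bool := c i <= p.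
Definition buyer_accepts (q : R) (j : 'I_m) : bool := q <= v j.

Definition accepting_matching (p q : R) (M : {set edge}) : bool :=
  is_matching M &&
  [forall e in M, seller_accepts p e.1 && buyer_accepts q e.2].

Definition max_card (p q : R) : nat :=
  \max_(M : {set edge} | accepting_matching p q M) #|M|.

Definition max_card_matching (p q : R) (M : {set edge}) : bool :=
  accepting_matching p q M && (#|M| == max_card p q).

(* round regret with worst-case matching rule:
   GFT* - min_{max-card matchings M} GFT(M)
   = max_{max-card matchings M} (GFT* - GFT(M)) *)
Definition round_regret (p q : R) : R :=
  \big[Num.max/0]_(M : {set edge} | max_card_matching p q M) (gft_star - gft M).

Definition feedback := ({ffun 'I_n -> bool} * {ffun 'I_m -> bool})%type.

Definition observe (p q : R) : feedback :=
  ([ffun i => seller_accepts p i], [ffun j => buyer_accepts q j]).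

(* deterministic single-price algorithm: maps the history of feedback
   to the next (common) price *)
Variable alg : seq feedback -> R.

Fixpoint history (t : nat) : seq feedback :=
  match t with
  | 0 => [::]
  | t'.+1 => let h := history t' in rcons h (observe (alg h) (alg h))
  end.

Definition price (t : nat) : R := alg (history t).

Definition cum_regret (T : nat) : R :=
  \sum_(t < T) round_regret (price t) (price t).

End Market.

(* Main.v *)
Require Import Defs.
From HB Require Import structures.
From mathcomp Require Import all_boot all_order all_algebra.
From mathcomp Require Import reals exp.
From mathcomp Require Import sequences ring lra zify.
Import Order.TTheory GRing.Theory Num.Theory.
Local Open Scope ring_scope.
Set Implicit Arguments. Unset Strict Implicit. Unset Printing Implicit Defensive.

Section Aux.
Variable R : realType.

Lemma bigmax0_ge (I : finType) (P : pred I) (F : I -> R) i :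
  P i -> F i <= \big[Num.max/0]_(j | P j) F j.
Proof.
move=> Pi; rewrite -big_filter.
have : i \in [seq j <- index_enum I | P j] by rewrite mem_filter Pi mem_index_enum.
elim: [seq j <- index_enum I | P j] => //= j s IH.
rewrite inE big_cons => /orP [/eqP -> | /IH H]; rewrite le_max ?lexx //.
by rewrite H orbT.
Qed.

Lemma bigmax0_ge0 (I : finType) (P : pred I) (F : I -> R) :
  0 <= \big[Num.max/0]_(j | P j) F j.
Proof.
by elim/big_rec: _ => // i x _ hx; rewrite le_max hx orbT.
Qed.

Let c0 := fun _ : 'I_1 => (0:R).

Lemma match_card (M : {set edge 1 2}) : is_matching M -> (#|M| <= 1)%N.
Proof.
move=> /forallP HM; apply/card_le1P => x xM y.
apply/idP/idP; last by move/eqP ->.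
move=> yM; have := HM y; rewrite yM /= => /forallP /(_ x); rewrite xM /=.
by rewrite [y.1]ord1 [x.1]ord1 eqxx /= => /eqP ->; rewrite inE.
Qed.

Lemma is_matching1 (e : edge 1 2) : is_matching [set e].
Proof.
apply/forallP => x; apply/implyP; rewrite inE => /eqP ->.
apply/forallP => y; apply/implyP; rewrite inE => /eqP ->.
by apply/implyP.
Qed.

Lemma is_matching0 : is_matching (set0 : {set edge 1 2}).
Proof. by apply/forallP => x; rewrite inE. Qed.

Lemma gft_star_ge (v : 'I_2 -> R) j : v j <= gft_star c0 v.
Proof.
have := @bigmax0_ge _ (@is_matching 1 2) (gft c0 v) [set (ord0, j)] (is_matching1 _).
by rewrite /gft big_set1 /= /c0 subr0.
Qed.

Lemma regret_ge0 (v : 'I_2 -> R) p : 0 <= round_regret c0 v p p.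
Proof. exact: bigmax0_ge0. Qed.

Lemma regret_under (v : 'I_2 -> R) p :
  0 <= p -> p <= v ord0 -> v ord0 <= v (lift ord0 ord0) ->
  v (lift ord0 ord0) - v ord0 <= round_regret c0 v p p.
Proof.
move=> p0 pv0 v01.
set M0 : {set edge 1 2} := [set (ord0, ord0)].
have acc : accepting_matching c0 v p p M0.
  rewrite /accepting_matching is_matching1 /=.
  apply/forallP => e; apply/implyP; rewrite inE => /eqP -> /=.
  by rewrite /seller_accepts /buyer_accepts /c0 p0 pv0.
have mc : Defs.max_card c0 v p p = 1%N.
  apply/eqP; rewrite eqn_leq; apply/andP; split.
    apply/bigmax_leqP => M /andP [HM _]; exact: match_card.
  by have := @leq_bigmax_cond _ _ (fun M : {set edge 1 2} => #|M|) M0 acc; rewrite cards1.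
have mcm : max_card_matching c0 v p p M0 by rewrite /max_card_matching acc mc cards1.
apply: le_trans (bigmax0_ge _ mcm).
rewrite /gft /M0 big_set1 /= /c0 subr0 lerB //.
exact: gft_star_ge.
Qed.

Lemma regret_over (v : 'I_2 -> R) p :
  v ord0 < p -> v (lift ord0 ord0) < p ->
  v (lift ord0 ord0) <= round_regret c0 v p p.
Proof.
move=> h0 h1.
have vj : forall j, v j < p by move=> j; case: (unliftP ord0 j) => [k ->|->] //; rewrite [k]ord1.
have mc : Defs.max_card c0 v p p = 0%N.
  apply/eqP; rewrite -leqn0; apply/bigmax_leqP => M /andP [_ /forallP HM].
  rewrite leqn0 cards_eq0; apply/eqP/setP => e; rewrite inE.
  apply/negbTE; apply/negP => eM; have := HM e; rewrite eM /= => /andP [_].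
  by rewrite /buyer_accepts leNgt vj.
have acc : accepting_matching c0 v p p set0.
  by rewrite /accepting_matching is_matching0 /=; apply/forallP => e; rewrite inE.
have mcm : max_card_matching c0 v p p set0 by rewrite /max_card_matching acc mc cards0.
apply: le_trans (bigmax0_ge _ mcm).
rewrite /gft big_set0 subr0; exact: gft_star_ge.
Qed.

End Aux.

Section Sim.
Variable R : realType.
Variable alg : seq (feedback 1 2) -> R.

Record st := St { sL : R; sU : R; sn : nat; sk : nat; sh : seq (feedback 1 2) }.

Definition fb (b : bool) : feedback 1 2 := ([ffun _ => true], [ffun _ => b]).

Definition ub (s : st) : bool := alg (sh s) <= sL s + (sU s - sL s) ^+ 3.

Definition sstep (s : st) : st :=
  let p := alg (sh s) in
  if ub s then St (Num.max (sL s) p) (sU s) (sn s).+1 (sk s) (rcons (sh s) (fb true))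
  else St (sL s) (Num.min (sU s) p) (sn s) (sk s).+1 (rcons (sh s) (fb false)).

Definition sim (t : nat) : st := iter t sstep (St (1/4) (1/2) 0 0 [::]).

Lemma simS t : sim t.+1 = sstep (sim t). Proof. by []. Qed.

Definition wd t := sU (sim t) - sL (sim t).

Lemma sinv t : 1/4 <= sL (sim t) /\ sL (sim t) < sU (sim t) /\ sU (sim t) <= 1/2.
Proof.
elim: t => [|t [h1 [h2 h3]]]; first by rewrite /sim /=; split; [lra|split; lra].
rewrite simS /sstep /ub.
have w0 : 0 < sU (sim t) - sL (sim t) by lra.
have w1 : sU (sim t) - sL (sim t) <= 1/4 by lra.
have w3 : (sU (sim t) - sL (sim t)) ^+ 3 < sU (sim t) - sL (sim t).
  move: w0 w1; set w := _ - _ => w0 w1; nra.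
case: ifP => /= H.
  split; first by rewrite le_max h1.
  by split => //; rewrite gt_max h2 /=; lra.
split => //; split; last by rewrite ge_min h3.
have : 0 <= (sU (sim t) - sL (sim t)) ^+ 3 by rewrite exprn_ge0 // ltW.
by move: H => /negbT; rewrite -ltNge => H H0; rewrite lt_min h2 /=; lra.
Qed.

Lemma wd_gt0 t : 0 < wd t.
Proof. have [h1 [h2 h3]] := sinv t; rewrite /wd; lra. Qed.

Lemma wd_le t : wd t <= 1/4.
Proof. have [h1 [h2 h3]] := sinv t; rewrite /wd; lra. Qed.

Lemma cnt t : (sn (sim t) + sk (sim t))%N = t.
Proof.
elim: t => // t IH; rewrite simS /sstep; case: ifP => _ /=; by rewrite ?addSn ?addnS IH.
Qed.

Lemma monoL s t : (s <= t)%N -> sL (sim s) <= sL (sim t).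
Proof.
move=> /subnK <-; elim: (t - s)%N => // d IH.
rewrite addSn simS /sstep; case: ifP => _ //=; apply: le_trans IH _; rewrite le_max lexx //.
Qed.

Lemma monoU s t : (s <= t)%N -> sU (sim t) <= sU (sim s).
Proof.
move=> /subnK <-; elim: (t - s)%N => // d IH.
rewrite addSn simS /sstep; case: ifP => _ //=; apply: le_trans _ IH; rewrite ge_min lexx //.
Qed.

Variable M : R.
Hypothesis M0 : 0 <= M.

Fixpoint Apot (j : nat) : R := if j is j'.+1 then (2 * Apot j' + 36 * M ^+ 2) ^+ 3 else 16.
Definition Cpot j := 2 * Apot j + 36 * M ^+ 2.

Lemma A_ge j : 16 <= Apot j.
Proof.
elim: j => [|j IH] /=; first lra.
have h : 32 <= 2 * Apot j + 36 * M ^+ 2.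
  have : 0 <= M ^+ 2 by rewrite sqr_ge0. lra.
apply: le_trans (_ : 2 * Apot j + 36 * M ^+ 2 <= _); first lra.
set x := 2 * Apot j + 36 * M ^+ 2 in h *.
have : 1 <= x by lra.
move=> hx; have : x <= x ^+ 2 by rewrite expr2; nra.
move=> hx2; rewrite exprS; nra.
Qed.

Lemma key_C w n j : 0 < w -> (n%:R) * w < M -> 1 <= w ^+ 2 * (Apot j + 3 * n%:R) ->
  1 <= w ^+ 2 * Cpot j.
Proof.
move=> w0 nw h; rewrite /Cpot.
have Aj := A_ge j.
have n0 : 0 <= (n%:R : R) by [].
case: (lerP 1 (2 * (w ^+ 2 * Apot j))) => H.
  have : 0 <= w ^+ 2 * M ^+ 2 by rewrite mulr_ge0 ?sqr_ge0.
  move=> ?; rewrite mulrDr; lra.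
have h2 : 1 <= w ^+ 2 * Apot j + 3 * M * w.
  apply: le_trans h _; rewrite mulrDr lerD2l.
  have : n%:R * w * (3 * w) <= M * (3 * w) by rewrite ler_pM2r ?ltW //; lra.
  move=> hh; rewrite expr2; nra.
have : 1 <= 6 * M * w by lra.
move=> hm.
have : 1 <= (6 * M * w) ^+ 2 by rewrite expr2; nra.
move=> hm2; rewrite mulrDr.
have : 0 <= w ^+ 2 * (2 * Apot j) by rewrite mulr_ge0 ?sqr_ge0 //; lra.
move: hm2; rewrite !exprMn_comm; try exact: mulrC.
move=> hm2 hh; nra.
Qed.


Lemma under_step (w w' X : R) : 0 < w -> w <= 1/4 -> w - w ^+ 3 <= w' ->
  1 <= w ^+ 2 * X -> 1 <= w' ^+ 2 * (X + 3).
Proof.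
move=> w0 w1 hw' h.
set a := w ^+ 2.
have {}h : 1 <= a * X by [].
have a0 : 0 < a by rewrite /a exprn_gt0.
have a1 : a <= 1/16 by rewrite /a expr2; nra.
have e : w - w ^+ 3 = w * (1 - a) by rewrite /a !exprS expr0 mulr1; ring.
have p0 : 0 <= w * (1 - a) by rewrite mulr_ge0 ?ltW //; lra.
have hsq : (w * (1 - a)) ^+ 2 <= w' ^+ 2.
  rewrite -e in p0 *; rewrite !expr2; apply: ler_pM; lra.
have X0 : 0 <= X.
  have : 0 < a * X by lra.
  by rewrite pmulr_rgt0 // => /ltW.
apply: le_trans (_ : (w * (1 - a)) ^+ 2 * (X + 3) <= _); last first.
  by rewrite ler_pM2r //; lra.
rewrite exprMn -/a.
have h1 : (1 - a) ^+ 2 <= (1 - a) ^+ 2 * (a * X).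
  by rewrite ler_pMr ?exprn_gt0 //; lra.
have h2 : (1 - a) ^+ 2 * (1 + 3 * a) >= 1.
  rewrite expr2; nra.
have : a * (1 - a) ^+ 2 * (X + 3) = (1 - a) ^+ 2 * (a * X) + 3 * a * (1 - a) ^+ 2 by ring.
move=> ->.
have : (1 - a) ^+ 2 * (1 + 3 * a) = (1 - a) ^+ 2 + 3 * a * (1 - a) ^+ 2 by ring.
lra.
Qed.

Lemma over_step (w w' c Y : R) : 0 < w -> w <= 1/4 -> w ^+ 3 <= w' ->
  1 <= w ^+ 2 * c -> 0 <= Y -> 1 <= w' ^+ 2 * (c ^+ 3 + Y).
Proof.
move=> w0 w1 hw' h Y0.
have c0 : 0 <= c.
  have : 0 < w ^+ 2 * c by lra.
  by rewrite pmulr_rgt0 ?exprn_gt0 // => /ltW.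
have w30 : 0 <= w ^+ 3 by rewrite exprn_ge0 // ltW.
have hsq : (w ^+ 3) ^+ 2 <= w' ^+ 2 by rewrite !expr2; apply: ler_pM; lra.
have h3 : 1 <= (w ^+ 2 * c) ^+ 3.
  by rewrite -(expr1n R 3); rewrite ler_pXn2r ?nnegrE //; lra.
have e : (w ^+ 2 * c) ^+ 3 = (w ^+ 3) ^+ 2 * c ^+ 3.
  by rewrite exprMn -!exprM mulnC.
apply: le_trans h3 _; rewrite e mulrDr.
have : (w ^+ 3) ^+ 2 * c ^+ 3 <= w' ^+ 2 * c ^+ 3 by apply: ler_wpM2r; rewrite ?exprn_ge0.
have : 0 <= w' ^+ 2 * Y by rewrite mulr_ge0 ?sqr_ge0.
lra.
Qed.

Lemma cube_le (w : R) : 0 < w -> w <= 1/4 -> w ^+ 3 <= w.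
Proof. move=> w0 w1; nra. Qed.

Lemma wd_under t : ub (sim t) -> wd t - wd t ^+ 3 <= wd t.+1 /\
   sn (sim t.+1) = (sn (sim t)).+1 /\ sk (sim t.+1) = sk (sim t).
Proof.
rewrite /wd simS /sstep => H; rewrite H /=; split => //.
move: H; rewrite /ub => H.
have : Num.max (sL (sim t)) (alg (sh (sim t))) <= sL (sim t) + (sU (sim t) - sL (sim t)) ^+ 3.
  rewrite ge_max H andbT; have := wd_gt0 t; rewrite /wd => h.
  by rewrite lerDl exprn_ge0 // ltW.
lra.
Qed.

Lemma wd_over t : ~~ ub (sim t) -> wd t ^+ 3 <= wd t.+1 /\
   sn (sim t.+1) = sn (sim t) /\ sk (sim t.+1) = (sk (sim t)).+1.
Proof.
rewrite /wd simS /sstep => H; rewrite (negbTE H) /=; split => //.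
move: H; rewrite /ub -ltNge => H.
have := cube_le (wd_gt0 t) (wd_le t); rewrite /wd => hc.
have : sL (sim t) + (sU (sim t) - sL (sim t)) ^+ 3 <= Num.min (sU (sim t)) (alg (sh (sim t))).
  by rewrite le_min (ltW H) andbT; lra.
lra.
Qed.

Lemma pot t : (forall s, (s < t)%N -> (sn (sim s))%:R * wd s < M) ->
  1 <= wd t ^+ 2 * (Apot (sk (sim t)) + 3 * (sn (sim t))%:R).
Proof.
elim: t => [|t IH] H.
  rewrite /wd /sim /=; lra.
have IH' := IH (fun s hs => H s (ltnW hs)).
have wt0 := wd_gt0 t; have wt1 := wd_le t.
case: (boolP (ub (sim t))) => hu.
  have [hw [hn hk]] := wd_under hu; rewrite hn hk.
  have := under_step wt0 wt1 hw IH'.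
  by rewrite -natr1; congr (_ <= _ * _); ring.
have [hw [hn hk]] := wd_over hu; rewrite hn hk.
have hc := key_C wt0 (H t (ltnSn t)) IH'.
apply: (over_step wt0 wt1 hw hc).
by rewrite mulr_ge0.
Qed.

Lemma C_ge1 j : 1 <= Cpot j.
Proof. have := A_ge j; have : 0 <= M ^+ 2 by rewrite sqr_ge0. rewrite /Cpot; lra. Qed.

Lemma C_mono j K : (j <= K)%N -> Cpot j <= Cpot K.
Proof.
move=> /subnK <-; elim: (K - j)%N => // d IH; apply: (le_trans IH).
rewrite addSn /Cpot /=.
set x := 2 * Apot (d + j) + 36 * M ^+ 2.
have hx : 1 <= x := C_ge1 (d + j).
have : x <= x ^+ 3 by rewrite exprS expr2; nra.
have : 0 <= M ^+ 2 by rewrite sqr_ge0.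
have : 16 <= Apot (d + j).+1 := A_ge _.
rewrite /=; lra.
Qed.

Lemma stop_exists T K : K%:R + M * Cpot K <= T%:R ->
  exists t, (t <= T)%N /\ ((K <= sk (sim t))%N \/ M <= (sn (sim t))%:R * wd t).
Proof.
move=> hT.
case: (boolP [exists t : 'I_T.+1, (K <= sk (sim t))%N || (M <= (sn (sim t))%:R * wd t)]).
  move=> /existsP [t /orP h]; exists t; split; first by rewrite -ltnS.
  by case: h; [left|right].
move=> /existsPn hn.
have H : forall t, (t <= T)%N -> (sk (sim t) < K)%N /\ (sn (sim t))%:R * wd t < M.
  move=> t ht; have := hn (Ordinal (ht : (t < T.+1)%N)).
  by rewrite negb_or -ltnNge -ltNge /= => /andP [h1 h2]; split.
have hp := pot (fun s hs => (H s (ltnW hs)).2).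
have [hk hnw] := H T (leqnn T).
have hc := key_C (wd_gt0 T) hnw hp.
have hCK := C_mono (ltnW hk).
have w0 := wd_gt0 T; have w1 := wd_le T.
set n := (sn (sim T))%:R in hnw hc hp.
have n0 : 0 <= n by rewrite /n.
have hn1 : n <= n * wd T * (wd T * Cpot (sk (sim T))).
  by rewrite -mulrA -[X in X <= _]mulr1 ler_wpM2l // mulrA -expr2.
have hn2 : n * wd T * (wd T * Cpot (sk (sim T))) <= M * (wd T * Cpot (sk (sim T))).
  apply: ler_wpM2r; last exact: ltW.
  have := C_ge1 (sk (sim T)); nra.
have hn3 : M * (wd T * Cpot (sk (sim T))) <= M * Cpot K.
  rewrite ler_wpM2l //; have := C_ge1 (sk (sim T)); nra.
have hkK : (sk (sim T))%:R + 1 <= (K%:R : R) by rewrite natr1 ler_nat.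
have eT : (T%:R : R) = n + (sk (sim T))%:R by rewrite /n -natrD cnt.
lra.
Qed.

End Sim.

Section Reg.
Variable R : realType.
Variable alg : seq (feedback 1 2) -> R.
Hypothesis Halg : forall h, 0 <= alg h <= 1.
Variable t : nat.

Let a := sL (sim alg t).
Let b := (sL (sim alg t) + sU (sim alg t)) / 2.
Definition vv : 'I_2 -> R := fun j => if j == ord0 then a else b.
Let c0 := fun _ : 'I_1 => (0:R).

Lemma hab_lt : a < b.
Proof. have [h1 [h2 h3]] := sinv alg t; rewrite /a /b; lra. Qed.

Lemma vv_ge j : a <= vv j.
Proof. have := hab_lt; rewrite /vv; case: ifP => _; lra. Qed.
Lemma vv_le j : vv j <= b.
Proof. have := hab_lt; rewrite /vv; case: ifP => _; lra. Qed.

Lemma shS s : sh (sim alg s.+1) = rcons (sh (sim alg s)) (fb (ub alg (sim alg s))).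
Proof. by rewrite simS /sstep; case: ifP. Qed.

Lemma obs_eq s : (s < t)%N ->
  observe c0 vv (alg (sh (sim alg s))) (alg (sh (sim alg s))) = fb (ub alg (sim alg s)).
Proof.
move=> hs; rewrite /observe /fb; congr pair; apply/ffunP => i; rewrite !ffunE.
  by rewrite /seller_accepts /c0; have /andP [] := Halg (sh (sim alg s)).
have hL := monoL alg hs; have hU := monoU alg hs.
have hvg := vv_ge i; have hvl := vv_le i.
have [h1 [h2 h3]] := sinv alg t.
rewrite /buyer_accepts; move: hL hU; rewrite simS /sstep.
case: ifP => hu /= hL hU.
  apply: le_trans hvg; apply: le_trans hL; rewrite le_max lexx orbT //.
apply/negbTE; rewrite -ltNge; apply: le_lt_trans hvl _.
apply: lt_le_trans (_ : sU (sim alg t) <= _); first by rewrite /b; lra.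
by apply: le_trans hU _; rewrite ge_min lexx orbT.
Qed.

Lemma hist_eq s : (s <= t)%N -> history c0 vv alg s = sh (sim alg s).
Proof.
elim: s => [|s IH] hs; first by [].
rewrite /= IH ?(ltnW hs) // shS obs_eq //.
Qed.

Lemma acc_reg s : (s <= t)%N ->
  (sn (sim alg s))%:R * (b - a) + (sk (sim alg s))%:R * b <=
  \sum_(i < s) round_regret c0 vv (Defs.price c0 vv alg i) (Defs.price c0 vv alg i).
Proof.
elim: s => [|s IH] hs; first by rewrite big_ord0 /sim /= !mul0r addr0.
rewrite big_ord_recr.
have := IH (ltnW hs).
rewrite /Defs.price hist_eq ?(ltnW hs) //.
have [h1 [h2 h3]] := sinv alg t.
have hab := hab_lt.
have hp := Halg (sh (sim alg s)).
have va : vv ord0 = a by [].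
have vb : vv (lift ord0 ord0) = b by [].
rewrite simS /sstep; case: ifP => hu /=.
  have h := @regret_under R vv (alg (sh (sim alg s))).
  rewrite va vb in h.
  have hL := monoL alg hs; rewrite simS /sstep hu /= in hL.
  have hm : alg (sh (sim alg s)) <= Num.max (sL (sim alg s)) (alg (sh (sim alg s))) by rewrite le_max lexx orbT.
  have := h (proj1 (andP hp)) (le_trans hm hL) (ltW hab).
  rewrite -natr1; lra.
have h := @regret_over R vv (alg (sh (sim alg s))).
rewrite va vb in h.
have hU := monoU alg hs; rewrite simS /sstep hu /= in hU.
have hpU : sU (sim alg t) <= alg (sh (sim alg s)) by apply: le_trans hU _; rewrite ge_min lexx orbT.
have := h ltac:(rewrite /a; lra) ltac:(rewrite /b; lra).
rewrite -natr1; lra.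
Qed.

End Reg.

Lemma regret_K (R : realType) (T K : nat) (alg : seq (feedback 1 2) -> R) :
  (forall h, 0 <= alg h <= 1) ->
  K%:R + (K%:R / 2) * @Cpot R (K%:R / 2) K <= T%:R ->
  exists v : 'I_2 -> R, (forall j, 0 <= v j <= 1) /\
    K%:R / 4 <= cum_regret (fun _ : 'I_1 => 0) v alg T.
Proof.
move=> Halg hT.
have M0 : 0 <= (K%:R : R) / 2 by rewrite divr_ge0.
have [t [htT hst]] := stop_exists alg M0 hT.
have [h1 [h2 h3]] := sinv alg t.
exists (vv alg t); split.
  move=> j; rewrite /vv; case: ifP => _; apply/andP; split; lra.
have hacc := acc_reg Halg (leqnn t).
have hsum : \sum_(i < t) round_regret (fun _ : 'I_1 => 0) (vv alg t)
      (Defs.price (fun _ : 'I_1 => 0) (vv alg t) alg i) (Defs.price (fun _ : 'I_1 => 0) (vv alg t) alg i)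
   <= cum_regret (fun _ : 'I_1 => 0) (vv alg t) alg T.
  rewrite /cum_regret (big_ord_widen _ (fun i => round_regret (fun _ : 'I_1 => 0) (vv alg t)
      (Defs.price (fun _ : 'I_1 => 0) (vv alg t) alg i) (Defs.price (fun _ : 'I_1 => 0) (vv alg t) alg i)) htT).
  rewrite [X in _ <= X](bigID (fun i : 'I_T => (i < t)%N)) /= lerDl.
  by apply: sumr_ge0 => i _; apply: regret_ge0.
apply: le_trans hsum; apply: le_trans hacc.
have n0 : 0 <= ((sn (sim alg t))%:R : R) by [].
have k0 : 0 <= ((sk (sim alg t))%:R : R) by [].
case: hst => [hk | hm].
  have hk' : (K%:R : R) <= (sk (sim alg t))%:R by rewrite ler_nat.
  have : 0 <= (sn (sim alg t))%:R * ((sL (sim alg t) + sU (sim alg t)) / 2 - sL (sim alg t)).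
    by rewrite mulr_ge0 //; lra.
  have : (K%:R : R) / 4 <= (sk (sim alg t))%:R * ((sL (sim alg t) + sU (sim alg t)) / 2).
    apply: le_trans (_ : (sk (sim alg t))%:R * (1/4) <= _); first by nra.
    by apply: ler_wpM2l => //; lra.
  lra.
have : (sk (sim alg t))%:R * ((sL (sim alg t) + sU (sim alg t)) / 2) >= 0 by rewrite mulr_ge0 //; lra.
move: hm; rewrite /wd => hm.
have e : (sL (sim alg t) + sU (sim alg t)) / 2 - sL (sim alg t) = (sU (sim alg t) - sL (sim alg t)) / 2 by lra.
rewrite e mulrA; lra.
Qed.

Lemma nat_a K : (96 + 27 * K ^ 2 <= 4 ^ (K + 5))%N.
Proof.
have h : (K < 2 ^ K)%N by apply: ltn_expl.
have e : (4 ^ (K + 5) = 1024 * (2 ^ K * 2 ^ K))%N.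
  by rewrite expnD -expnMn mulnC.
rewrite e; have : (1 <= 2 ^ K)%N by rewrite expn_gt0.
nia.
Qed.

Lemma nat_b K : (K.+1 * 2 + (K + 5) * 3 ^ K <= 9 ^ (K + 2))%N.
Proof.
have h : (K < 3 ^ K)%N by apply: ltn_expl.
have e : (9 ^ (K + 2) = 81 * (3 ^ K * 3 ^ K))%N.
  by rewrite expnD -expnMn mulnC.
rewrite e; nia.
Qed.

Section Bound.
Variable R : realType.
Variable K : nat.
Let M : R := K%:R / 2.
Let B : R := (4 ^ (K + 5))%:R.

Lemma C_bound j : 3 * Cpot M j <= B ^+ (3 ^ j).
Proof.
elim: j => [|j IH].
  rewrite expn0 expr1 /B /Cpot /= /M.
  have := nat_a K; rewrite -(ler_nat R) natrD natrM [(K ^ 2)%:R]natrX => h.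
  apply: le_trans h; rewrite expr_div_n.
  have : (2:R) ^+ 2 = 4 by rewrite expr2; lra.
  move=> ->; lra.
have hC := C_ge1 M j.
have hM : 0 <= M ^+ 2 by rewrite sqr_ge0.
have hCM : 36 * M ^+ 2 <= Cpot M j by rewrite /Cpot; have := A_ge M j; lra.
have e : Cpot M j.+1 = 2 * Cpot M j ^+ 3 + 36 * M ^+ 2 by [].
rewrite e expnS mulnC exprM.
have h3 : Cpot M j <= Cpot M j ^+ 3 by rewrite exprS expr2; nra.
have h0 : 0 <= 3 * Cpot M j by lra.
apply: le_trans (_ : (3 * Cpot M j) ^+ 3 <= _); last first.
  by rewrite ler_pXn2r // ?nnegrE //; apply: le_trans IH.
have -> : (3 * Cpot M j) ^+ 3 = 27 * Cpot M j ^+ 3 by ring.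
have : 0 <= Cpot M j ^+ 3 by rewrite exprn_ge0 //; lra.
lra.
Qed.

Lemma total_bound : K%:R + M * Cpot M K <= ((4 ^ (9 ^ (K + 2)))%N)%:R.
Proof.
have hX : 1 <= B ^+ (3 ^ K).
  apply: exprn_ege1; rewrite /B ler1n expn_gt0 //.
have hCb := C_bound K.
have hK0 : 0 <= (K%:R : R) by [].
have h1 : K%:R + M * Cpot M K <= (K.+1 * 2)%:R * B ^+ (3 ^ K).
  rewrite natrM -natr1 mulrDl mul1r.
  have : M * Cpot M K <= K%:R * B ^+ (3 ^ K).
    rewrite /M; have hC := C_ge1 M K.
    have : K%:R / 2 * Cpot M K <= K%:R * (3 * Cpot M K).
      have : 0 <= K%:R * Cpot M K by rewrite mulr_ge0 //; lra.
      lra.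
    move=> h; apply: le_trans h _; apply: ler_wpM2l => //.
  have : K%:R <= K%:R * B ^+ (3 ^ K) by rewrite ler_peMr.
  lra.
apply: le_trans h1 _.
rewrite /B -natrX -natrM ler_nat -expnM.
apply: (@leq_trans (4 ^ (K.+1 * 2) * 4 ^ ((K + 5) * 3 ^ K))).
  by rewrite leq_mul2r (ltnW (ltn_expl _ _)) ?orbT.
by rewrite -expnD leq_pexp2l // nat_b.
Qed.

End Bound.

Section Logs.
Variable R : realType.




Lemma expR1_le4 : expR (1:R) <= 4.
Proof.
have h1 : 1/2 <= expR (- (1/2) : R) by have := expR_ge1Dx (- (1/2) : R); lra.
have h2 : expR (1/2 : R) * expR (- (1/2)) = 1 by rewrite -expRD subrr expR0.
have h3 : expR (1/2 : R) <= 2.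
  have hp := expR_gt0 (1/2 : R); nra.
have -> : (1:R) = 2%:R * (1/2) by rewrite mulrC -mulrA mulVf //; lra.
rewrite expRM_natl expr2.
have hp := expR_gt0 (1/2 : R); nra.
Qed.

Lemma ln4_ge1 : 1 <= ln (4:R).
Proof.
rewrite -[X in X <= _](expRK 1) ler_ln ?expR1_le4 // posrE ?expR_gt0 //.
Qed.

Lemma ln_ge (x : R) (m : nat) : 4 ^+ m <= x -> m%:R <= ln x.
Proof.
move=> hx; have h4 : 0 < 4 ^+ m :> R by rewrite exprn_gt0.
have x0 : 0 < x by apply: lt_le_trans hx.
apply: le_trans (_ : ln (4 ^+ m) <= _); last by rewrite ler_ln.
rewrite lnXn // -mulr_natr.
have := ln4_ge1; have : 0 <= (m%:R : R) by []; nra.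
Qed.

Lemma ln_ub (x : R) (N : nat) : 0 < x -> x < 4 ^+ N -> ln x < N%:R * 4.
Proof.
move=> x0 hx; have h4 : 0 < 4 ^+ N :> R by rewrite exprn_gt0.
apply: lt_le_trans (_ : ln (4 ^+ N) <= _).
  by rewrite ltr_ln.
rewrite lnXn // -[ln _ *+ N]mulr_natl; apply: ler_wpM2l => //.
by apply: ltW; apply: ln_sublinear.
Qed.

End Logs.

Theorem theorem4p1 (R : realType) :
  exists kappa : R, 0 < kappa /\
  exists T0 : nat, forall T : nat, (T0 <= T)%N ->
  forall alg : seq (feedback 1 2) -> R,
    (forall h, 0 <= alg h <= 1) ->
    exists v : 'I_2 -> R, (forall j, 0 <= v j <= 1) /\
      kappa * (ln (ln T%:R) / ln (ln (ln (ln T%:R))))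
        <= cum_regret (fun _ : 'I_1 => 0) v alg T.
Proof.
exists (1/72); split; first lra.
exists (4 ^ (4 ^ (4 ^ 4)))%N.
move=> T hT0 alg Halg.
have h4 : (1 < 4)%N := erefl true.
have h9 : (1 < 9)%N := erefl true.
have hb : (4 ^ 4 < 4 ^ (4 ^ 4))%N := ltn_expl _ h4.
have hXr : (4:R) ^+ (4 ^ 4) <= (4 ^ (4 ^ 4))%N%:R.
  rewrite natrX; exact: lexx.
move: hT0 hb hXr; generalize (4 ^ (4 ^ 4))%N => X hT0 hb hXr.
have X0 : (0 < X)%N by apply: leq_ltn_trans hb.
have T0 : (0 < T)%N by apply: leq_trans hT0; rewrite expn_gt0.
set e1 := trunc_log 4 T.
have he1lo : (4 ^ e1 <= T)%N by apply: trunc_logP.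
have he1hi : (T < 4 ^ e1.+1)%N by apply: trunc_log_ltn.
have he1big : (X <= e1)%N by apply: trunc_log_max.
have e10 : (0 < e1)%N by apply: leq_trans he1big.
set e2 := trunc_log 9 e1.
have he2lo : (9 ^ e2 <= e1)%N by apply: trunc_logP.
have he2hi : (e1 < 9 ^ e2.+1)%N by apply: trunc_log_ltn.
have he2 : (2 <= e2)%N.
  apply: trunc_log_max => //; apply: leq_trans he1big.
  by apply: leq_trans (ltnW hb).
set K := (e2 - 2)%N.
have eK : e2 = (K + 2)%N by rewrite /K subnK.
have hT : K%:R + (K%:R / 2) * @Cpot R (K%:R / 2) K <= T%:R.
  apply: le_trans (total_bound R K) _; rewrite ler_nat.
  apply: leq_trans he1lo; rewrite leq_pexp2l // -eK //.
have [v [hv hreg]] := regret_K Halg hT.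
exists v; split => //; apply: le_trans hreg.
have Tpos : (0 : R) < T%:R by rewrite ltr0n.
have hTr : (4 : R) ^+ X <= T%:R by rewrite -natrX ler_nat.
have l1 := ln_ge hTr.
have l1' := le_trans hXr l1.
have l2 := ln_ge l1'.
rewrite natrX in l2.
have l3 := ln_ge l2.
have l3' : (4:R) ^+ 1 <= ln (ln (ln T%:R)) by rewrite expr1.
have l4 := ln_ge l3'.
have hup : T%:R < (4 : R) ^+ (9 ^ (K + 3)).
  rewrite -natrX ltr_nat; apply: leq_trans he1hi _.
  rewrite leq_pexp2l //; have : (e2.+1 = K + 3)%N by rewrite eK; lia.
  by move=> <-.
have u1 := ln_ub Tpos hup.
have lT0 : 0 < ln (T%:R : R).
  apply: lt_le_trans l1'; exact: exprn_gt0.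
have hup2 : ln (T%:R : R) < (9 : R) ^+ (K + 4).
  apply: lt_le_trans u1 _.
  rewrite natrX (_ : (K + 4 = (K + 3).+1)%N); last lia.
  rewrite exprS; have : (0:R) <= 9 ^+ (K + 3) by rewrite exprn_ge0.
  lra.
have u2 : ln (ln (T%:R : R)) < (K + 4)%:R * 9.
  have h9p : (0:R) < 9 ^+ (K + 4) by rewrite exprn_gt0.
  apply: lt_le_trans (_ : ln ((9:R) ^+ (K + 4)) <= _).
    by rewrite ltr_ln.
  rewrite lnXn // -[ln _ *+ _]mulr_natl; apply: ler_wpM2l => //.
  by apply: ltW; apply: ln_sublinear.
have e4 : (4:R) ^+ 4 = 256 by rewrite !exprS expr0; lra.
rewrite e4 in l2.
move: l4 u2; rewrite natrD => l4 u2.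
set LL := ln (ln (T%:R : R)) in l2 u2 *.
set L4 := ln (ln LL) in l4 *.
have L40 : 0 < L4 by apply: lt_le_trans l4; rewrite ltr01.
have hd : LL / L4 <= LL.
  rewrite ler_pdivrMr //; nra.
have : (1%:R : R) = 1 by []. 
lra.
Qed.
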